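(* Let $d\ge2$, $G$ a $d$-regular graph on $n$ vertices, $F$ regular, $T=F^{-1}(1-1/d)$ (so $F(T)=1-1/d$) and $p=T\cdot(1-1/d)^d$. Then for every price $p'>0$ and every $T'$ with $T'\cdot F(T')^d=p'$ (i.e. $T'\cdot\mathbf{1}\in\mathcal{N}_{p'\cdot\mathbf{1}}$ is a symmetric equilibrium), $$\mathcal{R}(p\cdot\mathbf{1},T\cdot\mathbf{1})\ \ge\ c\cdot\mathcal{R}(p'\cdot\mathbf{1},T'\cdot\mathbf{1})$$ for an absolute constant $c>0$ (one may take $c=1/16$). Here $\mathcal{R}(p'\cdot\mathbf{1},T'\cdot\mathbf{1})=n\,T'(1-F(T'))F(T')^d$.
   Context: Public-goods pricing game: $n$ buyers are the vertices of an undirected graph $G=([n],E)$; $N(i)=\{j:(i,j)\in E\}$ (so $i\notin N(i)$); $G$ is $d$-regular if $|N(i)|=d$ for all $i$. Values i.i.d. with cumulative distribution function $F$, $F(\infty)=1$. An equilibrium for price vector $\mathbf{p}$ is $\mathbf{T}\in[0,\infty]^n$ (buyer $i$ purchases iff $v_i\ge T_i$) with $T_i=p_i/\prod_{j\in N(i)}F(T_j)$ for all $i$; $\mathcal{N}_{\mathbf{p}}$ is the set of equilibria; $\mathcal{R}(\mathbf{p},\mathbf{T})=\sum_ip_i(1-F(T_i))$; $p\cdot\mathbf{1}$ is the uniform price vector. $F$ is regular: atomless, supported on an interval in $[0,\infty)$ with positive density $f$ there, and $\phi(x)=x-\frac{1-F(x)}{f(x)}$ non-decreasing. $F^{-1}(q)=\min\{x:F(x)=q\}$.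 *)

(* Defs.v *)
From Stdlib Require Import Reals Lra Lia List.
Import ListNotations.
Open Scope R_scope.

(* A simple undirected graph on vertices 0..n-1, given by neighbour lists:
   nb i is the (duplicate-free) list N(i). *)
Definition is_graph (n : nat) (nb : nat -> list nat) : Prop :=
  forall i, (i < n)%nat ->
    NoDup (nb i) /\ ~ In i (nb i) /\
    (forall j, In j (nb i) -> (j < n)%nat /\ In i (nb j)).

Definition d_regular (n d : nat) (nb : nat -> list nat) : Prop :=
  forall i, (i < n)%nat -> length (nb i) = d.

Definition is_cdf (F : R -> R) : Prop :=
  (forall x y, x <= y -> F x <= F y) /\
  (forall x, 0 <= F x <= 1) /\
  (forall eps, eps > 0 -> exists M, forall x, x < M -> F x < eps) /\
  (forall eps, eps > 0 -> exists M, forall x, x > M -> 1 - F x < eps).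

(* x lies in the (open) support interval (a, b), b = None meaning +oo *)
Definition in_int (a : R) (b : option R) (x : R) : Prop :=
  a < x /\ match b with Some b' => x < b' | None => True end.

(* Regular distribution: atomless (continuous CDF), supported on an interval
   [a,b] (or [a,+oo)) within [0,oo), with positive density f = F' there, and
   virtual value phi(x) = x - (1-F x)/f x non-decreasing on the interval. *)
Definition regular (F : R -> R) : Prop :=
  is_cdf F /\ continuity F /\
  exists (a : R) (b : option R) (f : R -> R),
    0 <= a /\
    (match b with Some b' => a < b' | None => True end) /\
    (forall x, x <= a -> F x = 0) /\
    (match b with Some b' => forall x, b' <= x -> F x = 1 | None => True end) /\
    (forall x, in_int a b x -> derivable_pt_lim F x (f x) /\ f x > 0) /\
    (forall x y, in_int a b x -> in_int a b y -> x <= y ->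
        x - (1 - F x) / f x <= y - (1 - F y) / f y).

Definition is_Finv (F : R -> R) (q x : R) : Prop :=
  F x = q /\ (forall y, F y = q -> x <= y).

Fixpoint prodF (F : R -> R) (T : nat -> R) (l : list nat) : R :=
  match l with [] => 1 | j :: l' => F (T j) * prodF F T l' end.

Definition equilibrium (n : nat) (nb : nat -> list nat) (F : R -> R)
  (p T : nat -> R) : Prop :=
  forall i, (i < n)%nat -> T i = p i / prodF F T (nb i).

Definition revenue (n : nat) (F : R -> R) (p T : nat -> R) : R :=
  fold_right Rplus 0 (map (fun i => p i * (1 - F (T i))) (seq 0 n)).

Definition unif (c : R) : nat -> R := fun _ => c.

(* Main.v *)
Require Import Defs.
From Stdlib Require Import Reals Lra Lia List.
Open Scope R_scope.
Local Notation in_int := Defs.in_int.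

Lemma Rle_div_l (x y z : R) : 0 < y -> x <= z * y -> x / y <= z.
Proof.
  intros hy h. replace z with (z * y / y) by (field; lra).
  unfold Rdiv. apply Rmult_le_compat_r; [left; apply Rinv_0_lt_compat; lra| lra].
Qed.

Lemma bern (x : R) (n : nat) : -1 <= x -> 1 + INR n * x <= (1 + x) ^ n.
Proof.
  intro hx. induction n as [|n IH]; [simpl; lra|].
  rewrite S_INR. cbn [pow].
  assert (0 <= INR n) by apply pos_INR.
  assert (0 <= INR n * (x*x)) by (apply Rmult_le_pos; nra).
  nra.
Qed.

Lemma exp_pow_n (x : R) (n : nat) : exp x ^ n = exp (INR n * x).
Proof.
  induction n as [|n IH].
  - simpl. rewrite Rmult_0_l, exp_0; reflexivity.
  - rewrite S_INR. cbn [pow]. rewrite IH, <- exp_plus. f_equal. ring.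
Qed.

Lemma qpow (d : nat) : (2 <= d)%nat -> (1 - 1 / INR d) ^ d >= 1/6.
Proof.
  intro hd.
  assert (HD : 2 <= INR d) by (replace 2 with (INR 2) by (simpl; lra); apply le_INR; lia).
  set (D := INR d) in *.
  assert (h1 : (1 - 1/D) ^ d * (1 + 1/D) ^ d >= 1/2).
  { rewrite <- Rpow_mult_distr.
    assert (E : (1 - 1/D) * (1 + 1/D) = 1 + (- (1/(D*D)))) by (field; lra).
    rewrite E.
    assert (B := bern (- (1/(D*D))) d).
    assert (0 < 1/(D*D) <= 1) by (assert (4 <= D*D) by nra; split; [apply Rdiv_lt_0_compat; lra| apply Rle_div_l; lra]).
    assert (INR d * (- (1/(D*D))) = - (1/D)) by (fold D; field; lra).
    assert (1/D <= 1/2) by (apply Rle_div_l; lra).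
    fold D in B, H0. specialize (B ltac:(lra)). lra. }
  assert (h2 : (1 + 1/D) ^ d <= 3).
  { apply Rle_trans with (exp (1/D) ^ d).
    - apply pow_incr. split.
      + assert (0 < 1/D) by (apply Rdiv_lt_0_compat; lra). lra.
      + assert (1/D <> 0) by (apply Rgt_not_eq, Rdiv_lt_0_compat; lra).
        left. apply exp_ineq1; auto.
    - rewrite exp_pow_n. fold D. replace (D * (1/D)) with 1 by (field; lra).
      apply exp_le_3. }
  assert (0 <= (1 - 1/D) ^ d).
  { apply pow_le. assert (1/D <= 1/2) by (apply Rle_div_l; lra). lra. }
  assert (0 <= (1 + 1/D) ^ d).
  { apply pow_le. assert (0 < 1/D) by (apply Rdiv_lt_0_compat; lra). lra. }
  nra.
Qed.

Lemma rbound (d : nat) (r : R) : (1 <= d)%nat -> 0 <= r <= 1 -> INR d * (r ^ d * (1 - r)) <= 1.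
Proof.
  intros hd hr.
  destruct (Req_dec r 0) as [->|hr0].
  - destruct d; [lia|]. simpl. lra.
  - assert (rp : 0 < r) by lra.
    set (s := / r).
    assert (rs : r * s = 1) by (unfold s; field; lra).
    assert (s1 : 1 <= s) by (unfold s; rewrite <- Rinv_1; apply Rinv_le_contravar; lra).
    assert (B := bern (s - 1) d ltac:(lra)).
    replace (1 + (s - 1)) with s in B by ring.
    assert (E : r ^ d * s ^ d = 1) by (rewrite <- Rpow_mult_distr, rs; apply pow1).
    assert (P : 0 <= r ^ d) by (apply pow_le; lra).
    assert (0 <= INR d) by apply pos_INR.
    assert (1 - r <= s - 1).
    { assert (0 <= (1 - r) * (1 - r)) by nra. nra. }
    assert (r ^ d * (1 + INR d * (s - 1)) <= 1) by nra.
    assert (0 <= r ^ d * INR d * ((s - 1) - (1 - r))) by (apply Rmult_le_pos; [apply Rmult_le_pos|]; lra).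
    nra.
Qed.

Lemma sum_const (k : R) (l : list nat) :
  fold_right Rplus 0 (map (fun _ => k) l) = INR (length l) * k.
Proof.
  induction l as [|x l IH]; simpl; [ring|].
  rewrite IH. destruct (length l); simpl; ring.
Qed.

Lemma rev_unif n F c t : revenue n F (unif c) (unif t) = INR n * (c * (1 - F t)).
Proof.
  unfold revenue, unif. rewrite sum_const, length_seq. reflexivity.
Qed.

Section Key.
Variables (F f : R -> R) (a : R) (b : option R).
Hypotheses (mono : forall x y, x <= y -> F x <= F y)
  (bnd : forall x, 0 <= F x <= 1)
  (cont : continuity F) (ha : 0 <= a)
  (hle : forall x, x <= a -> F x = 0)
  (hder : forall x, in_int a b x -> derivable_pt_lim F x (f x) /\ f x > 0)
  (hphi : forall x y, in_int a b x -> in_int a b y -> x <= y ->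
        x - (1 - F x) / f x <= y - (1 - F y) / f y).

Lemma in_between x y z : in_int a b x -> in_int a b y -> x <= z <= y -> in_int a b z.
Proof.
  unfold in_int; destruct b; intros [? ?] [? ?] ?; split; lra.
Qed.

Lemma Fpos x : in_int a b x -> F x > 0.
Proof.
  intro hx. set (m := (a + x)/2).
  assert (hm : in_int a b m) by (destruct hx as [h1 h2]; apply (in_between m x m); unfold in_int in *; destruct b; unfold m in *; repeat split; lra).
  assert (mx : m < x) by (destruct hx; unfold m; lra).
  destruct (MVT_cor2 F f m x mx) as [c [Hc Hc']].
  { intros c Hc. apply hder. apply (in_between m x c); auto. }
  assert (in_int a b c) by (apply (in_between m x c); auto; lra).
  assert (f c > 0) by (apply hder; auto).
  assert (0 <= F m) by apply bnd.
  nra.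
Qed.

Lemma pointwise x : in_int a b x -> F x * (1 - F x) <= x * f x.
Proof.
  intro hx.
  destruct (Rle_or_lt (F x * (1 - F x)) (x * f x)) as [H|H]; [exact H|exfalso].
  assert (F0 := Fpos x hx).
  destruct (hder x hx) as [_ f0].
  assert (xa : a < x) by (destruct hx; auto).
  set (c := - (x - (1 - F x) / f x)).
  assert (K : (1 - F x) * F x / f x > x).
  { apply Rlt_gt. apply Rmult_lt_reg_r with (f x); [lra|].
    replace ((1 - F x) * F x / f x * f x) with ((1 - F x) * F x) by (field; lra). lra. }
  assert (cF : c * F x > x * (1 - F x)).
  { unfold c. replace (- (x - (1 - F x) / f x) * F x) with ((1 - F x) * F x / f x - x * F x) by (field; lra). lra. }
  assert (bx := bnd x).
  assert (cpos : c > 0) by nra.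
  set (g := fun y => y * (1 - F y) - c * F y).
  assert (gx : g x < 0) by (unfold g; lra).
  destruct (cont a (- g x / c) ltac:(apply Rdiv_lt_0_compat; lra)) as [alp [alpp Halp]].
  set (y1 := a + Rmin alp (x - a) / 2).
  assert (Rmin alp (x - a) > 0) by (apply Rmin_pos; lra).
  assert (Rmin alp (x - a) <= alp) by apply Rmin_l.
  assert (Rmin alp (x - a) <= x - a) by apply Rmin_r.
  assert (y1a : a < y1) by (unfold y1; lra).
  assert (y1x : y1 < x) by (unfold y1; lra).
  assert (Fy1 : F y1 < - g x / c).
  { assert (HH := Halp y1). simpl in HH. unfold R_dist in HH.
    rewrite (hle a (Rle_refl a)) in HH.
    assert (H4 : Rabs (F y1 - 0) < - g x / c).
    { apply HH. split; [split; [exact I| lra]|]. rewrite Rabs_right; unfold y1; lra. }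
    rewrite Rminus_0_r in H4. apply Rabs_def2 in H4. lra. }
  assert (gy1 : g y1 > g x).
  { assert (0 <= y1 * (1 - F y1)) by (assert (bb := bnd y1); nra).
    assert (c * F y1 < - g x) by (apply (Rmult_lt_compat_l c) in Fy1; [|lra];
       replace (c * (- g x / c)) with (- g x) in Fy1 by (field; lra); exact Fy1).
    unfold g at 1; lra. }
  set (g' := fun z => 1 * (1 - F z) + z * (0 - f z) - c * f z).
  destruct (MVT_cor2 g g' y1 x y1x) as [z [Hz Hz']].
  { intros z Hz. assert (iz : in_int a b z) by (apply (in_between y1 x z); auto; unfold in_int in *; destruct b; intuition lra).
    destruct (hder z iz) as [HF _].
    assert (DH1 := derivable_pt_lim_mult id (fct_cte 1 - F)%F z 1 (0 - f z)
      (derivable_pt_lim_id z) (derivable_pt_lim_minus (fct_cte 1) F z 0 (f z) (derivable_pt_lim_const 1 z) HF)).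
    assert (DH2 := derivable_pt_lim_scal F c z (f z) HF).
    exact (derivable_pt_lim_minus _ _ _ _ _ DH1 DH2). }
  assert (iz : in_int a b z) by (apply (in_between y1 x z); [unfold in_int in *; destruct b; intuition lra|auto|lra]).
  destruct (hder z iz) as [_ fz].
  set (phiz := z - (1 - F z) / f z).
  assert (Hfz : f z * phiz = z * f z - (1 - F z)) by (unfold phiz; field; lra).
  assert (ph : phiz <= x - (1 - F x) / f x) by (apply hphi; auto; lra).
  assert (E : g' z = f z * ((x - (1 - F x) / f x) - phiz)).
  { unfold g'. rewrite (Rmult_minus_distr_l (f z) _ phiz), Hfz. unfold c. field. lra. }
  assert (0 <= g' z) by (rewrite E; apply Rmult_le_pos; lra).
  nra.
Qed.

Lemma key x y : in_int a b x -> in_int a b y -> x <= y ->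
  y * (1 - F y) * F x <= x * (1 - F x) * F y.
Proof.
  intros hx hy [xy| <-]; [|lra].
  assert (Fx := Fpos x hx). assert (Fy := Fpos y hy).
  set (u := fun z => z * (1 - F z) / F z).
  set (u' := fun z => ((1 * (1 - F z) + z * (0 - f z)) * F z - f z * (z * (1 - F z))) / (F z)²).
  destruct (MVT_cor2 u u' x y xy) as [z [Hz Hz']].
  { intros z Hz. assert (iz : in_int a b z) by (apply (in_between x y z); auto).
    destruct (hder z iz) as [HF _].
    assert (Fz := Fpos z iz).
    assert (DH1 := derivable_pt_lim_mult id (fct_cte 1 - F)%F z 1 (0 - f z)
      (derivable_pt_lim_id z) (derivable_pt_lim_minus (fct_cte 1) F z 0 (f z) (derivable_pt_lim_const 1 z) HF)).
    exact (derivable_pt_lim_div _ F z _ _ DH1 HF ltac:(lra)). }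
  assert (iz : in_int a b z) by (apply (in_between x y z); auto; lra).
  assert (Fz := Fpos z iz).
  assert (P := pointwise z iz).
  assert (u' z <= 0).
  { unfold u', Rdiv.
    assert (0 < / (F z)²) by (apply Rinv_0_lt_compat; unfold Rsqr; nra).
    assert (N : (1 * (1 - F z) + z * (0 - f z)) * F z - f z * (z * (1 - F z)) <= 0) by nra.
    nra. }
  assert (u y <= u x) by nra.
  unfold u in H0.
  assert (Ey : y * (1 - F y) / F y * (F x * F y) = y * (1 - F y) * F x) by (field; lra).
  assert (Ex : x * (1 - F x) / F x * (F x * F y) = x * (1 - F x) * F y) by (field; lra).
  rewrite <- Ey, <- Ex. apply Rmult_le_compat_r; nra.
Qed.

End Key.

Theorem lemma4p2 (n d : nat) (nb : nat -> list nat) (F : R -> R) (T p : R)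
  (hd : (2 <= d)%nat)
  (hG : is_graph n nb) (hreg : d_regular n d nb)
  (hF : regular F)
  (hT : is_Finv F (1 - 1 / INR d) T)
  (hp : p = T * (1 - 1 / INR d) ^ d) :
  forall p' T' : R, p' > 0 -> T' * F T' ^ d = p' ->
    revenue n F (unif p) (unif T) >= 1 / 16 * revenue n F (unif p') (unif T').
Proof.
  intros p' T' hp' hT'.
  rewrite !rev_unif.
  assert (Hn : 0 <= INR n) by apply pos_INR.
  assert (HD : 2 <= INR d) by (replace 2 with (INR 2) by (simpl; lra); apply le_INR; lia).
  assert (Q6 := qpow d hd).
  set (D := INR d) in *. set (q := 1 - 1/D) in *.
  assert (q12 : 1/2 <= q < 1).
  { unfold q. assert (1/D <= 1/2) by (apply Rle_div_l; lra).
    assert (0 < 1/D) by (apply Rdiv_lt_0_compat; lra). lra. }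
  destruct hF as [[mono [bnd _]] [cont [a [b [f [ha [hab [hle [hge [hder hphi]]]]]]]]]].
  destruct hT as [FT _].
  assert (Ta : a < T).
  { destruct (Rle_or_lt T a) as [h|h]; [|exact h]. rewrite (hle T h) in FT. lra. }
  assert (iT : in_int a b T).
  { split; [exact Ta|]. destruct b as [b'|]; [|exact I].
    destruct (Rle_or_lt b' T) as [h|h]; [|exact h]. rewrite (hge T h) in FT. lra. }
  set (r := F T') in *.
  assert (br := bnd T'). fold r in br.
  assert (qd0 : 0 <= q ^ d) by (apply pow_le; lra).
  assert (rd0 : 0 <= r ^ d) by (apply pow_le; lra).
  assert (rd1 : r ^ d <= 1) by (rewrite <- (pow1 d); apply pow_incr; lra).
  assert (T'p : 0 < T').
  { destruct (Rle_or_lt T' 0) as [h|h]; [|exact h]. nra. }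
  assert (LHS : p * (1 - F T) = T * q ^ d * (1 / D)).
  { rewrite hp, FT. unfold q. field. lra. }
  assert (goal : p * (1 - F T) >= 1/16 * (p' * (1 - r))).
  2: { nra. }
  rewrite LHS, <- hT'.
  assert (invD : 0 < 1 / D) by (apply Rdiv_lt_0_compat; lra).
  assert (TD : 0 < T * (1 / D)) by (apply Rmult_lt_0_compat; lra).
  assert (TQ : T * q ^ d * (1 / D) >= T * (1 / D) * (1/6)).
  { replace (T * q ^ d * (1 / D)) with (T * (1/D) * q ^ d) by ring.
    apply Rmult_ge_compat_l; lra. }
  destruct (Rle_or_lt T' T) as [h|h].
  - assert (RB := rbound d r ltac:(lia) br). fold D in RB.
    assert (r ^ d * (1 - r) <= 1 / D).
    { apply Rmult_le_reg_l with D; [lra|]. replace (D * (1/D)) with 1 by (field; lra). lra. }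
    assert (0 <= r ^ d * (1 - r)) by nra.
    assert (T' * r ^ d * (1 - r) <= T * (1 / D)) by nra.
    nra.
  - destruct (Req_dec r 1) as [r1|r1].
    { rewrite r1. assert (0 <= T * q ^ d * (1/D)) by (apply Rmult_le_pos; [nra|lra]). nra. }
    assert (iT' : in_int a b T').
    { split; [lra|]. destruct b as [b'|]; [|exact I].
      destruct (Rle_or_lt b' T') as [hh|hh]; [|exact hh]. exfalso. apply r1. unfold r. apply hge; auto. }
    assert (K := key F f a b bnd cont ha hle hder hphi T T' iT iT' ltac:(lra)).
    fold r in K. rewrite FT in K.
    assert (1 - q = 1 / D) by (unfold q; ring).
    (* T' (1-r) q <= T (1-q) r <= T (1-q) *)
    assert (T' * (1 - r) * q <= T * (1 / D)) by nra.
    assert (T' * (1 - r) <= 2 * T * (1/D)) by nra.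
    assert (0 <= T' * (1 - r)) by nra.
    assert (T' * r ^ d * (1 - r) <= T' * (1 - r)) by nra.
    nra.
Qed.
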